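(* For every $\mathbf x\in[-\alpha,1]^n$ there is a unique $\lambda\in\mathcal P(\mathbf x)$ whose support $\{\mathbf a\in D^n:\lambda(\mathbf a)>0\}$ forms a chain in $D^n$ with respect to $\preceq$ (i.e. any two elements of the support are comparable).
   Context: Fix $\alpha\in(0,1]$ and $D=\{-\alpha,0,1\}\subset\mathbb R$. Define the partial order $\preceq$ on $D$ by $0\preceq 1$, $0\preceq -\alpha$ (plus reflexivity), with $1$ and $-\alpha$ incomparable; extend it componentwise to $D^n$. For $\mathbf x\in[-\alpha,1]^n$, let $\mathcal P(\mathbf x)$ be the set of all functions $\lambda:D^n\to[0,1]$ with $\sum_{\mathbf a\in D^n}\lambda(\mathbf a)=1$ and $\sum_{\mathbf a\in D^n}\lambda(\mathbf a)\,\mathbf a=\mathbf x$ (vectors in $D^n\subset\mathbb R^n$), i.e. probability distributions on $D^n$ with mean $\mathbf x$. *)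

(* Defs.v *)
From HB Require Import structures.
From mathcomp Require Import all_boot all_order all_algebra.
Set Implicit Arguments. Unset Strict Implicit. Unset Printing Implicit Defensive.
Import Order.TTheory GRing.Theory Num.Theory.
Local Open Scope ring_scope.

(* The three-element set D = {-alpha, 0, 1}, as an abstract finite type. *)
Inductive D3 := DNeg | DZero | DOne.

Definition D3_to_ord (d : D3) : 'I_3 :=
  match d with DNeg => @Ordinal 3 0 isT | DZero => @Ordinal 3 1 isT | DOne => @Ordinal 3 2 isT end.
Definition ord_to_D3 (i : 'I_3) : D3 :=
  match val i with 0%N => DNeg | 1%N => DZero | _ => DOne end.
Lemma D3_to_ordK : cancel D3_to_ord ord_to_D3. Proof. by case. Qed.

HB.instance Definition _ := Finite.copy D3 (can_type D3_to_ordK).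

Definition dval (R : numDomainType) (alpha : R) (d : D3) : R :=
  match d with DNeg => - alpha | DZero => 0 | DOne => 1 end.

Definition leD (d e : D3) : bool := (d == e) || (d == DZero).

Definition leDn (n : nat) (a b : {ffun 'I_n -> D3}) : bool :=
  [forall i, leD (a i) (b i)].

Definition in_P (R : numDomainType) (alpha : R) (n : nat) (x : 'I_n -> R)
    (lam : {ffun {ffun 'I_n -> D3} -> R}) : Prop :=
  (forall a, 0 <= lam a <= 1) /\
  (\sum_a lam a = 1) /\
  (forall i : 'I_n, \sum_a lam a * dval alpha (a i) = x i).

Definition support_chain (R : numDomainType) (n : nat)
    (lam : {ffun {ffun 'I_n -> D3} -> R}) : Prop :=
  forall a b, 0 < lam a -> 0 < lam b -> leDn a b || leDn b a.

(* Main.v *)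
Require Import Defs.
From HB Require Import structures.
From mathcomp Require Import all_boot all_order all_algebra.
From mathcomp Require Import lra.
Import Order.TTheory GRing.Theory Num.Theory.
Local Open Scope ring_scope.
Set Implicit Arguments. Unset Strict Implicit.

Lemma big_idx_op (T : Type) (op : SemiGroup.com_law T) z y (I : finType) (P : pred I) F :
  \big[op/op y z]_(i | P i) F i = op y (\big[op/z]_(i | P i) F i).
Proof.
apply: (big_rec2 (fun a b => a = op y b)) => // i a b _ ->.
by rewrite !SemiGroup.opA; congr (op _ b); apply: SemiGroup.opC.
Qed.


Section G.
Variables (R : realFieldType) (n : nat) (p : 'I_n -> R).

Definition gg (A : {set 'I_n}) (lo hi : R) (S : {set 'I_n}) : R :=
  Num.max 0 (\big[Num.min/hi]_(i in S) p i - \big[Num.max/lo]_(i in A :\: S) p i).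

Lemma gg_out (A : {set 'I_n}) lo hi (S : {set 'I_n}) k : k \in A -> k \notin S ->
  gg A lo hi S = gg (A :\ k) (Num.max lo (p k)) hi S.
Proof.
move=> kA kS; rewrite /gg [X in _ - X](bigD1 k) /=; last by rewrite inE kS kA.
rewrite [Num.max lo _]maxC big_idx_op; congr (Num.max 0 (_ - Num.max _ _)).
by apply: eq_bigl => i; rewrite !inE; case: (i \in S); case: (i \in A); case: (i != k).
Qed.

Lemma gg_in (A : {set 'I_n}) lo hi (S : {set 'I_n}) k : k \notin S ->
  gg A lo hi (k |: S) = gg (A :\ k) lo (Num.min hi (p k)) S.
Proof.
move=> kS; rewrite /gg (bigD1 k) /=; last by rewrite !inE eqxx.
rewrite [Num.min hi _]minC big_idx_op; congr (Num.max 0 (Num.min _ _ - _)).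
  apply: eq_bigl => i; rewrite !inE.
  by case: (i =P k) => [->|_] /=; [rewrite (negbTE kS) | rewrite andbT].
by apply: eq_bigl => i; rewrite !inE; case: (i \in S); case: (i \in A); case: (i == k).
Qed.

Lemma sum_in (A : {set 'I_n}) (lo hi : R) k : k \in A ->
  \sum_(S : {set 'I_n} | (S \subset A) && (k \in S)) gg A lo hi S =
  \sum_(S : {set 'I_n} | S \subset A :\ k) gg (A :\ k) lo (Num.min hi (p k)) S.
Proof.
move=> kA.
rewrite (reindex_onto (fun S => k |: S) (fun S => S :\ k)) /=; last first.
  by move=> S /andP[_ kS]; rewrite setD1K.
apply: eq_big => S.
  rewrite setU11 andbT subUset sub1set kA /=.
  apply/andP/idP.
    move=> [SA /eqP e]; have kS : k \notin S by rewrite -e !inE eqxx.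
    by apply/subsetP => i iS; rewrite !inE (subsetP SA) // andbT; apply: contraNneq kS => <-.
  move=> SAk; have kS : k \notin S by apply/negP => /(subsetP SAk); rewrite !inE eqxx.
  split; first by apply: subset_trans SAk (subsetDl _ _).
  by apply/eqP; rewrite setU1K.
move=> /andP[_ /eqP e]; have kS : k \notin S by rewrite -e !inE eqxx.
by rewrite gg_in.
Qed.

Lemma sum_out (A : {set 'I_n}) (lo hi : R) k : k \in A ->
  \sum_(S : {set 'I_n} | (S \subset A) && (k \notin S)) gg A lo hi S =
  \sum_(S : {set 'I_n} | S \subset A :\ k) gg (A :\ k) (Num.max lo (p k)) hi S.
Proof.
move=> kA; apply: eq_big => S.
  apply/andP/idP.
    move=> [SA kS]; apply/subsetP => i iS; rewrite !inE (subsetP SA) // andbT.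
    by apply: contraNneq kS => <-.
  move=> SAk; have kS : k \notin S by apply/negP => /(subsetP SAk); rewrite !inE eqxx.
  by split=> //; apply: subset_trans SAk (subsetDl _ _).
by move=> /andP[_ kS]; rewrite (@gg_out A lo hi S k kA kS).
Qed.

Lemma max_split (lo hi c : R) :
  Num.max 0 (Num.min hi c - lo) + Num.max 0 (hi - Num.max lo c) = Num.max 0 (hi - lo).
Proof.
case: (leP hi c) => h1; case: (leP lo c) => h2;
repeat (case: leP => ?); lra.
Qed.

Lemma sum_gg m : forall (A : {set 'I_n}) (lo hi : R), #|A| = m ->
  \sum_(S : {set 'I_n} | S \subset A) gg A lo hi S = Num.max 0 (hi - lo).
Proof.
elim: m => [|m IH] A lo hi cA.
  move/cards0_eq: cA => ->.
  rewrite (big_pred1 set0); last by move=> S; rewrite subset0.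
  by rewrite /gg !big_pred0 // => i; rewrite !inE.
have [k kA] : exists k, k \in A.
  by apply/set0Pn; rewrite -card_gt0 cA.
have cAk : #|A :\ k| = m by move: cA; rewrite (cardsD1 k) kA => -[].
rewrite (bigID (fun S : {set 'I_n} => k \in S)) /= sum_in // sum_out // !IH //.
by rewrite max_split.
Qed.

Lemma sum_gg_in (A : {set 'I_n}) (lo hi : R) k : k \in A ->
  \sum_(S : {set 'I_n} | (S \subset A) && (k \in S)) gg A lo hi S
   = Num.max 0 (Num.min hi (p k) - lo).
Proof. by move=> kA; rewrite sum_in // (@sum_gg #|A :\ k|). Qed.

End G.

Section Main.
Variables (R : realFieldType) (alpha : R) (n : nat) (x : 'I_n -> R).
Hypothesis halpha0 : 0 < alpha.
Hypothesis hx : forall i, - alpha <= x i <= 1.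

Local Notation FT := {ffun 'I_n -> D3}.

Definition sg i : D3 := if 0 <= x i then DOne else DNeg.
Definition sv i : R := dval alpha (sg i).
Definition pp i : R := x i / sv i.
Definition Nz (a : FT) : {set 'I_n} := [set i | a i != DZero].
Definition cons (a : FT) : bool := [forall i, (a i == DZero) || (a i == sg i)].
Definition phi (S : {set 'I_n}) : FT := [ffun i => if i \in S then sg i else DZero].
Definition lam : {ffun FT -> R} :=
  [ffun a => if cons a then gg pp [set: 'I_n] 0 1 (Nz a) else 0].

Lemma sv_neq0 i : sv i != 0.
Proof.
rewrite /sv /sg; case: ifP => _ /=; first exact: oner_neq0.
by rewrite oppr_eq0 gt_eqF.
Qed.

Lemma pp_sv i : pp i * sv i = x i.
Proof. by rewrite /pp mulfVK // sv_neq0. Qed.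

Lemma pp01 i : 0 <= pp i <= 1.
Proof.
have := hx i; rewrite /pp /sv /sg; case: ifP => h /= /andP[h1 h2].
  by rewrite divr1 h h2.
have hl : x i < 0 by rewrite ltNge h.
rewrite invrN mulrN -mulNr divr_ge0 ?oppr_ge0 ?(ltW hl) ?(ltW halpha0) //=.
by rewrite ler_pdivrMr // mul1r lerNl.
Qed.

Lemma sg_nz i : sg i != DZero.
Proof. by rewrite /sg; case: ifP. Qed.

Lemma consK a : cons a -> phi (Nz a) = a.
Proof.
move=> /forallP ca; apply/ffunP => i; rewrite ffunE inE.
by case/orP: (ca i) => /eqP ->; rewrite ?eqxx //= sg_nz.
Qed.

Lemma cons_phi S : cons (phi S).
Proof. by apply/forallP => i; rewrite ffunE; case: ifP; rewrite eqxx ?orbT. Qed.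

Lemma Nz_phi S : Nz (phi S) = S.
Proof.
by apply/setP => i; rewrite inE ffunE; case: ifP => _; rewrite ?sg_nz ?eqxx.
Qed.

Lemma sum_cons (G : FT -> R) :
  \sum_(a : FT) (if cons a then G a else 0) = \sum_(S : {set 'I_n}) G (phi S).
Proof.
rewrite -big_mkcond (reindex_onto phi Nz) /=; last by move=> a; apply: consK.
by apply: eq_bigl => S; rewrite cons_phi Nz_phi eqxx.
Qed.

Lemma lam_sum : \sum_a lam a = 1.
Proof.
rewrite (eq_bigr (fun a => if cons a then gg pp [set: 'I_n] 0 1 (Nz a) else 0));
  last by move=> a _; rewrite ffunE.
rewrite sum_cons (eq_bigr (fun S => gg pp [set: 'I_n] 0 1 S)); last first.
  by move=> S _; rewrite Nz_phi.
rewrite (eq_bigl (fun S : {set 'I_n} => S \subset [set: 'I_n])); last first.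
  by move=> S; rewrite subsetT.
by rewrite (@sum_gg _ _ _ #|[set: 'I_n]|) // subr0 max_r // ler01.
Qed.

Lemma lam_marg i : \sum_a lam a * dval alpha (a i) = x i.
Proof.
rewrite (eq_bigr (fun a => if cons a then gg pp [set: 'I_n] 0 1 (Nz a) * dval alpha (a i) else 0));
  last by move=> a _; rewrite ffunE; case: ifP; rewrite ?mul0r.
rewrite sum_cons.
rewrite (eq_bigr (fun S : {set 'I_n} => if i \in S then gg pp [set: 'I_n] 0 1 S * sv i else 0)); last first.
  by move=> S _; rewrite Nz_phi ffunE; case: ifP; rewrite ?mulr0.
rewrite -big_mkcond -mulr_suml.
rewrite (eq_bigl (fun S : {set 'I_n} => (S \subset [set: 'I_n]) && (i \in S))); last first.
  by move=> S; rewrite subsetT.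
rewrite sum_gg_in ?inE // subr0.
have /andP[h0 h1] := pp01 i.
by rewrite min_r // max_r // pp_sv.
Qed.

Lemma lam_ge0 a : 0 <= lam a.
Proof. by rewrite ffunE; case: ifP => _ //; rewrite le_max lexx. Qed.

Lemma lam_le1 a : lam a <= 1.
Proof.
rewrite -lam_sum (bigD1 a) //= lerDl; apply: sumr_ge0 => b _; exact: lam_ge0.
Qed.

Lemma min_le_in (S : {set 'I_n}) (hi : R) i : i \in S -> \big[Num.min/hi]_(j in S) pp j <= pp i.
Proof. by move=> iS; rewrite (bigD1 i) //= ge_min lexx. Qed.

Lemma max_ge_in (S : {set 'I_n}) (lo : R) i : i \in S -> pp i <= \big[Num.max/lo]_(j in S) pp j.
Proof. by move=> iS; rewrite (bigD1 i) //= le_max lexx. Qed.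

Lemma gg_pos_lt S i j : 0 < gg pp [set: 'I_n] 0 1 S -> i \in S -> j \notin S -> pp j < pp i.
Proof.
rewrite /gg lt_max ltxx /= subr_gt0 => h iS jS.
apply: le_lt_trans (max_ge_in 0 (_ : j \in [set: 'I_n] :\: S)) _; first by rewrite !inE jS.
exact: lt_le_trans h (min_le_in _ iS).
Qed.

Lemma lam_chain : support_chain lam.
Proof.
move=> a b; rewrite !ffunE.
case ca: (cons a); last by rewrite ltxx.
case cb: (cons b); last by rewrite ltxx.
move=> ha hb; apply/negPn/negP; rewrite negb_or => /andP[/forallPn[i hi] /forallPn[j hj]].
move: hi hj; rewrite /leD !negb_or => /andP[hi1 hi2] /andP[hj1 hj2].
have bi : b i = DZero.
  move/forallP: cb => /(_ i); move/forallP: ca => /(_ i); rewrite (negbTE hi2) /= => /eqP ai.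
  by case/orP => /eqP // bi; rewrite ai bi eqxx in hi1.
have aj : a j = DZero.
  move/forallP: ca => /(_ j); move/forallP: cb => /(_ j); rewrite (negbTE hj2) /= => /eqP bj.
  by case/orP => /eqP // aj; rewrite aj bj eqxx in hj1.
have iNa : i \in Nz a by rewrite inE.
have iNb : i \notin Nz b by rewrite inE bi eqxx.
have jNa : j \notin Nz a by rewrite inE aj eqxx.
have jNb : j \in Nz b by rewrite inE.
have := gg_pos_lt ha iNa jNa; have := gg_pos_lt hb jNb iNb.
by move=> h1 h2; have := lt_trans h1 h2; rewrite ltxx.
Qed.


Section Uniq.
Variable mu : {ffun FT -> R}.
Hypothesis muP : in_P alpha x mu.
Hypothesis muC : support_chain mu.

Let mu_ge0 b : 0 <= mu b.
Proof. by case: muP => /(_ b) /andP[]. Qed.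

Definition mass (P : pred FT) := \sum_(b | P b) mu b.

Lemma mass_le (P Q : pred FT) : (forall b, 0 < mu b -> P b -> Q b) -> mass P <= mass Q.
Proof.
move=> h; rewrite /mass [X in X <= _]big_mkcond [X in _ <= X]big_mkcond /=.
apply: ler_sum => b _; have := mu_ge0 b; rewrite le_eqVlt => /orP[/eqP <-|hb].
  by case: ifP; case: ifP.
by case: ifP => Pb; [rewrite (h _ hb Pb) | case: ifP].
Qed.

Lemma mass_eq (P Q : pred FT) : (forall b, 0 < mu b -> P b = Q b) -> mass P = mass Q.
Proof.
by move=> h; apply/eqP; rewrite eq_le !mass_le // => b hb; rewrite h.
Qed.

Lemma Nz_mono b c : leDn b c -> Nz b \subset Nz c.
Proof.
move/forallP=> h; apply/subsetP => i; rewrite !inE => bi.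
by case/orP: (h i) => /eqP e; [rewrite -e | rewrite e eqxx in bi].
Qed.

Definition upcl (Y : pred FT) := forall b c, leDn b c -> Y b -> Y c.

Lemma nested (Y Z : pred FT) : upcl Y -> upcl Z ->
  (forall b, 0 < mu b -> Y b -> Z b) \/ (forall b, 0 < mu b -> Z b -> Y b).
Proof.
move=> uY uZ.
case: (boolP [exists b, [&& 0 < mu b, Y b & ~~ Z b]]) => [/existsP[b /and3P[hb Yb nZb]]|/existsPn h].
  right=> c hc Zc; case/orP: (muC hb hc) => l.
    exact: uY l Yb.
  by have := uZ _ _ l Zc; rewrite (negbTE nZb).
left=> b hb Yb; have := h b; rewrite hb Yb /=; exact: negbNE.
Qed.

Lemma mass_and (Y Z : pred FT) : upcl Y -> upcl Z ->
  mass [pred b | Y b && Z b] = Num.min (mass Y) (mass Z).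
Proof.
move=> uY uZ; case: (nested uY uZ) => h.
  rewrite min_l; last exact: mass_le.
  by apply: mass_eq => b hb /=; case Yb: (Y b); rewrite ?(h _ hb Yb).
rewrite min_r; last exact: mass_le.
by apply: mass_eq => b hb /=; case Zb: (Z b); rewrite ?(h _ hb Zb) ?andbF.
Qed.

Lemma mass_or (Y Z : pred FT) : upcl Y -> upcl Z ->
  mass [pred b | Y b || Z b] = Num.max (mass Y) (mass Z).
Proof.
move=> uY uZ; case: (nested uY uZ) => h.
  rewrite max_r; last exact: mass_le.
  by apply: mass_eq => b hb /=; case Yb: (Y b); rewrite ?(h _ hb Yb).
rewrite max_l; last exact: mass_le.
by apply: mass_eq => b hb /=; case Zb: (Z b); rewrite ?(h _ hb Zb) ?orbT ?orbF.
Qed.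

Lemma mass_tot : mass predT = 1.
Proof. by case: muP => _ []. Qed.

Lemma supp_cons b : 0 < mu b -> cons b.
Proof.
move=> hb; apply/forallP => i; apply/negPn/negP; rewrite negb_or => /andP[bz bs].
have supp c : 0 < mu c -> (c i == DZero) || (c i == b i).
  move=> hc; case/orP: (muC hb hc) => /forallP /(_ i); rewrite /leD.
    by rewrite (negbTE bz) orbF eq_sym => ->; rewrite orbT.
  by rewrite orbC.
set v := dval alpha (b i).
have hv : x i * v <= 0.
  move: bs; rewrite /v /sg; case: ifP => h.
    by case: (b i) (bz) => //= _ _; rewrite mulrN oppr_le0 mulr_ge0 // ltW.
  by case: (b i) (bz) => //= _ _; rewrite mulr1 ltW // ltNge h.
have hv2 : 0 < v * v.
  by rewrite /v; case: (b i) (bz) => //= _; rewrite ?mulNr ?mulrN ?opprK ?mulr1 ?mulr_gt0.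
have term c : 0 <= mu c * dval alpha (c i) * v.
  have := mu_ge0 c; rewrite le_eqVlt => /orP[/eqP <-|hc]; first by rewrite !mul0r.
  case/orP: (supp c hc) => /eqP E; rewrite E; first by rewrite /= mulr0 mul0r.
  by rewrite -/v -mulrA mulr_ge0 // ?mu_ge0 // ltW.
have : 0 < x i * v.
  case: muP => _ [_ /(_ i) <-]; rewrite mulr_suml (bigD1 b) //=.
  apply: lt_le_trans (_ : 0 < mu b * dval alpha (b i) * v) _.
    by rewrite -mulrA mulr_gt0.
  by rewrite lerDl sumr_ge0.
by rewrite ltNge hv.
Qed.

Lemma mass_E i : mass (fun b => i \in Nz b) = pp i.
Proof.
apply: (mulIf (sv_neq0 i)); rewrite pp_sv.
case: muP => _ [_ /(_ i) <-]; rewrite /mass big_mkcond mulr_suml /=.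
apply: eq_bigr => b _.
have := mu_ge0 b; rewrite le_eqVlt => /orP[/eqP <-|hb]; first by case: ifP; rewrite !mul0r.
move/forallP: (supp_cons hb) => /(_ i); rewrite inE.
by case/orP => /eqP ->; rewrite ?eqxx ?sg_nz //= mulr0 mul0r.
Qed.

Lemma upE k : upcl (fun b => k \in Nz b).
Proof. by move=> b c l; apply: (subsetP (Nz_mono l)). Qed.

Lemma upS (J : {set 'I_n}) : upcl (fun b => J \subset Nz b).
Proof. by move=> b c l h; apply: subset_trans h (Nz_mono l). Qed.

Lemma upX (J : {set 'I_n}) : upcl (fun b => [exists j in J, j \in Nz b]).
Proof.
move=> b c l /existsP[j /andP[jJ jb]]; apply/existsP; exists j.
by rewrite jJ (subsetP (Nz_mono l)).
Qed.

Lemma mass_sub m : forall J : {set 'I_n}, #|J| = m ->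
  mass (fun b => J \subset Nz b) = \big[Num.min/1]_(i in J) pp i.
Proof.
elim: m => [|m IH] J cJ.
  move/cards0_eq: cJ => ->; rewrite big_pred0; last by move=> i; rewrite inE.
  by rewrite -mass_tot; apply: mass_eq => b _; rewrite sub0set.
have [k kJ] : exists k, k \in J by apply/set0Pn; rewrite -card_gt0 cJ.
have cJk : #|J :\ k| = m by move: cJ; rewrite (cardsD1 k) kJ => -[].
rewrite (bigD1 k) //=.
have -> : \big[Num.min/1]_(i in J | i != k) pp i = \big[Num.min/1]_(i in J :\ k) pp i.
  by apply: eq_bigl => i; rewrite !inE andbC.
rewrite -IH // -mass_E -mass_and; [|exact: upE|exact: upS].
apply: mass_eq => b _ /=.
by rewrite -{1}(setD1K kJ) subUset sub1set.
Qed.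

Lemma mass_ex m : forall J : {set 'I_n}, #|J| = m ->
  mass (fun b => [exists j in J, j \in Nz b]) = \big[Num.max/0]_(i in J) pp i.
Proof.
elim: m => [|m IH] J cJ.
  move/cards0_eq: cJ => ->; rewrite big_pred0; last by move=> i; rewrite inE.
  by rewrite /mass big_pred0 // => b; apply/existsP => -[j]; rewrite inE.
have [k kJ] : exists k, k \in J by apply/set0Pn; rewrite -card_gt0 cJ.
have cJk : #|J :\ k| = m by move: cJ; rewrite (cardsD1 k) kJ => -[].
rewrite (bigD1 k) //=.
have -> : \big[Num.max/0]_(i in J | i != k) pp i = \big[Num.max/0]_(i in J :\ k) pp i.
  by apply: eq_bigl => i; rewrite !inE andbC.
rewrite -IH // -mass_E -mass_or; [|exact: upE|exact: upX].
apply: mass_eq => b _ /=.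
apply/existsP/idP.
  move=> [j /andP[jJ jb]]; case: (j =P k) => [<-|/eqP jk]; first by rewrite jb.
  by apply/orP; right; apply/existsP; exists j; rewrite in_setD1 jk jJ jb.
case/orP => [kb|/existsP[j /andP[jJ jb]]]; first by exists k; rewrite kJ.
by exists j; rewrite jb (subsetP (subsetDl J [set k])).
Qed.

Lemma core a0 : cons a0 -> mu a0 = gg pp [set: 'I_n] 0 1 (Nz a0).
Proof.
move=> ca0; set S := Nz a0.
have hm := @mass_sub #|S| S erefl.
have hM := @mass_ex #|~: S| (~: S) erefl.
rewrite /gg setTD -hm -hM.
have dec : mass (fun b => S \subset Nz b)
   = mu a0 + mass (fun b => (S \subset Nz b) && (b != a0)).
  by rewrite /mass (bigD1 a0) //= subxx.
have key b : 0 < mu b -> (S \subset Nz b) && (b != a0) -> [exists j in ~: S, j \in Nz b].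
  move=> hb /andP[Sb ba]; apply: contraT => /existsPn h.
  have bS : Nz b \subset S.
    apply/subsetP => j jb; apply/negPn/negP => jS; by have := h j; rewrite in_setC jS jb.
  have e : Nz b = S by apply/eqP; rewrite eqEsubset bS Sb.
  by move: ba; rewrite -(consK (supp_cons hb)) -(consK ca0) e eqxx.
have hle := mass_le key.
have := mu_ge0 a0; rewrite le_eqVlt => /orP[/eqP h0|hpos].
  rewrite -h0 max_l //; move: dec hle; rewrite -h0 add0r => ->.
  by rewrite subr_le0.
have heq : mass (fun b => (S \subset Nz b) && (b != a0)) = mass (fun b => [exists j in ~: S, j \in Nz b]).
  apply/eqP; rewrite eq_le hle /=; apply: mass_le => b hb /existsP[j /andP[jS jb]].
  case/orP: (muC hpos hb) => l.
    by rewrite (Nz_mono l) /=; apply/eqP => e; move: jS; rewrite in_setC /S -e jb.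
  by move: jS; rewrite inE (subsetP (Nz_mono l)).
rewrite dec heq addrK max_r //; exact: ltW.
Qed.

End Uniq.

Lemma uniq_lam (mu : {ffun FT -> R}) : in_P alpha x mu -> support_chain mu -> lam = mu.
Proof.
move=> muP muC; apply/ffunP => a; rewrite ffunE.
case ca: (cons a); first by rewrite (core muP muC ca).
have : 0 <= mu a by case: muP => /(_ a) /andP[].
rewrite le_eqVlt => /orP[/eqP //|hp].
by rewrite (supp_cons muP muC hp) in ca.
Qed.

End Main.

Theorem lemma1 (R : realFieldType) (alpha : R) (halpha0 : 0 < alpha)
    (halpha1 : alpha <= 1) (n : nat) (x : 'I_n -> R)
    (hx : forall i, - alpha <= x i <= 1) :
  exists! lam : {ffun {ffun 'I_n -> D3} -> R},
    in_P alpha x lam /\ support_chain lam.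
Proof.
exists (lam alpha x); split.
  split; last exact: lam_chain.
  split; first by move=> a; rewrite lam_ge0 ?lam_le1.
  by split; [exact: lam_sum | exact: lam_marg].
by move=> mu [muP muC]; apply: uniq_lam.
Qed.
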